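(* Let $N\ge 3$, $p>1$, and let $r_1\le r_2\le\dots\le r_N$ be arbitrary points of $[0,1]$. Define $\tilde\sigma\in S_N$ by $$\tilde\sigma(i)=\begin{cases}2i-1 & \text{if } i\le (N+1)/2,\\ 2N-2i+2 & \text{if } i>(N+1)/2.\end{cases}$$ Then the Hamiltonian cycle $h[\tilde\sigma]=(r_{\tilde\sigma(1)},r_{\tilde\sigma(2)},\dots,r_{\tilde\sigma(N)},r_{\tilde\sigma(1)})$ is optimal: $E(h[\tilde\sigma])\le E(h)$ for every Hamiltonian cycle $h$ of $\mathcal K_N$. Equivalently, the minimal cost equals $|r_2-r_1|^p+|r_N-r_{N-1}|^p+\sum_{i=1}^{N-2}|r_{i+2}-r_i|^p$.
   Context: The points $r_1,\dots,r_N$ are the vertices of the complete graph $\mathcal K_N$. For $p\in\mathbb R$ the weight of the edge $\{r_i,r_j\}$ is $w_{ij}=|r_i-r_j|^p$, and the cost of a Hamiltonian cycle $h$ is $E(h)=\sum_{e\in h}w_e$. For a permutation $\sigma\in S_N$, $h[\sigma]$ denotes the Hamiltonian cycle with edges $\{r_{\sigma(i)},r_{\sigma(i+1)}\}$, $i=1,\dots,N$, where $\sigma(N+1):=\sigma(1)$. *)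

(* Defs.v *)
From Stdlib Require Import Reals Lra Lia List Arith.
Import ListNotations.
Open Scope R_scope.

(* |x|^p for real p > 0, with the convention 0^p = 0
   (Stdlib's Rpower 0 p is exp (p * ln 0) = 1, so we guard it). *)
Definition abspow (x p : R) : R :=
  if Req_EM_T x 0 then 0 else Rpower (Rabs x) p.

Definition weight (p a b : R) : R := abspow (a - b) p.

Definition is_perm (N : nat) (s : nat -> nat) : Prop :=
  (forall i, (1 <= i <= N)%nat -> (1 <= s i <= N)%nat) /\
  (forall i j, (1 <= i <= N)%nat -> (1 <= j <= N)%nat -> s i = s j -> i = j).

Definition cyc_next (N i : nat) : nat := if Nat.eqb i N then 1%nat else S i.

Definition cycle_cost (N : nat) (p : R) (r : nat -> R) (s : nat -> nat) : R :=
  fold_right Rplus 0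
    (map (fun i => weight p (r (s i)) (r (s (cyc_next N i)))) (seq 1 N)).

Definition sigma_tilde (N : nat) (i : nat) : nat :=
  if Nat.leb (2 * i) (N + 1) then (2 * i - 1)%nat else (2 * N + 2 - 2 * i)%nat.

Definition min_cost_formula (N : nat) (p : R) (r : nat -> R) : R :=
  abspow (r 2%nat - r 1%nat) p + abspow (r N - r (N - 1)%nat) p +
  fold_right Rplus 0
    (map (fun i => abspow (r (i + 2)%nat - r i) p) (seq 1 (N - 2))).

(* Main.v *)
Require Import Defs.
From Stdlib Require Import Reals Lra Lia List Arith Permutation.
Import ListNotations.
Open Scope R_scope.

Lemma Rpower_pos x y : 0 < Rpower x y.
Proof. unfold Rpower; apply exp_pos. Qed.

Lemma Rpower_one y : Rpower 1 y = 1.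
Proof. unfold Rpower; rewrite ln_1, Rmult_0_r; apply exp_0. Qed.

Lemma abspow_pos x p : 0 < x -> abspow x p = Rpower x p.
Proof.
  intro Hx; unfold abspow; destruct (Req_EM_T x 0); [lra|].
  rewrite Rabs_right by lra; reflexivity.
Qed.

Lemma abspow_0 p : abspow 0 p = 0.
Proof. unfold abspow; destruct (Req_EM_T 0 0); [reflexivity|lra]. Qed.

Lemma abspow_opp x p : abspow (- x) p = abspow x p.
Proof.
  unfold abspow; destruct (Req_EM_T (-x) 0); destruct (Req_EM_T x 0); try lra.
  rewrite Rabs_Ropp; reflexivity.
Qed.

Lemma abspow_nonneg x p : 0 <= abspow x p.
Proof. unfold abspow; destruct (Req_EM_T x 0); [lra|]. left; apply Rpower_pos. Qed.

Lemma abspow_mono p a b : 0 < p -> 0 <= a <= b -> abspow a p <= abspow b p.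
Proof.
  intros Hp Hab. destruct (Req_dec a 0) as [->|Ha].
  - rewrite abspow_0; apply abspow_nonneg.
  - rewrite !abspow_pos by lra. apply Rle_Rpower_l; lra.
Qed.

Lemma Rpower_le_self x p : 1 <= p -> 0 < x <= 1 -> Rpower x p <= x.
Proof.
  intros Hp Hx.
  replace p with (1 + (p - 1)) by ring. rewrite Rpower_plus, Rpower_1 by lra.
  assert (Rpower x (p-1) <= 1).
  { assert (H0 : Rpower x (p-1) <= Rpower 1 (p-1)) by (apply Rle_Rpower_l; lra).
    rewrite Rpower_one in H0; exact H0. }
  assert (0 < Rpower x (p-1)) by apply Rpower_pos. nra.
Qed.

Lemma superadd p b d : 1 <= p -> 0 < b -> 0 < d ->
  Rpower b p + Rpower d p <= Rpower (b + d) p.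
Proof.
  intros Hp Hb Hd. set (s := b + d).
  assert (Hs : 0 < s) by (unfold s; lra).
  replace b with ((b / s) * s) at 1 by (field; lra).
  replace d with ((d / s) * s) at 1 by (field; lra).
  rewrite <- !Rpower_mult_distr; try (apply Rdiv_lt_0_compat; lra); try lra.
  assert (H1 : Rpower (b/s) p <= b / s).
  { apply Rpower_le_self; auto. split. apply Rdiv_lt_0_compat; lra.
    apply Rmult_le_reg_r with s; auto. unfold Rdiv; rewrite Rmult_assoc, Rinv_l; unfold s; lra. }
  assert (H2 : Rpower (d/s) p <= d / s).
  { apply Rpower_le_self; auto. split. apply Rdiv_lt_0_compat; lra.
    apply Rmult_le_reg_r with s; auto. unfold Rdiv; rewrite Rmult_assoc, Rinv_l; unfold s; lra. }
  assert (Hsum : b / s + d / s = 1) by (unfold s; field; lra).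
  assert (0 < Rpower s p) by apply Rpower_pos.
  nra.
Qed.

Lemma incr_pos p a b d : 1 <= p -> 0 < a -> a < b -> 0 < d ->
  Rpower (a + d) p - Rpower a p <= Rpower (b + d) p - Rpower b p.
Proof.
  intros Hp Ha Hab Hd.
  destruct (MVT_cor2 (fun t => Rpower (t + d) p - Rpower t p)
     (fun t => p * Rpower (t + d) (p - 1) - p * Rpower t (p - 1)) a b Hab) as [c [Hc Hc2]].
  { intros c Hc. apply derivable_pt_lim_minus.
    - replace (p * Rpower (c + d) (p - 1)) with (p * Rpower (c + d) (p - 1) * 1) by ring.
      apply (derivable_pt_lim_comp (fun t => t + d) (fun t => Rpower t p)).
      + replace 1 with (1 + 0) by ring. apply derivable_pt_lim_plus.
        apply derivable_pt_lim_id. apply derivable_pt_lim_const.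
      + apply derivable_pt_lim_power; lra.
    - apply derivable_pt_lim_power; lra. }
  cbv beta in Hc.
  assert (Rpower c (p-1) <= Rpower (c+d) (p-1)) by (apply Rle_Rpower_l; lra).
  assert (0 <= (p * Rpower (c + d) (p - 1) - p * Rpower c (p - 1)) * (b - a)).
  { apply Rmult_le_pos; nra. }
  lra.
Qed.

Lemma incr p a b d : 1 <= p -> 0 <= a <= b -> 0 <= d ->
  abspow (a + d) p - abspow a p <= abspow (b + d) p - abspow b p.
Proof.
  intros Hp Hab Hd.
  destruct (Req_dec d 0) as [->|Hd0]. { rewrite !Rplus_0_r; lra. }
  destruct (Req_dec a b) as [->|Hab0]. { lra. }
  destruct (Req_dec a 0) as [->|Ha0].
  - rewrite abspow_0, Rplus_0_l, !abspow_pos by lra.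
    pose proof (superadd p b d Hp ltac:(lra) ltac:(lra)). lra.
  - rewrite !abspow_pos by lra. apply incr_pos; lra.
Qed.

Lemma key p ra rb rc rd re : 1 <= p ->
  ra <= rb -> rb <= rd -> ra <= rc -> rc <= rd -> rd <= re ->
  abspow (re - rd) p + abspow (re - rc) p - abspow (rd - rc) p <=
  abspow (re - rb) p + abspow (re - ra) p - abspow (rb - ra) p.
Proof.
  intros Hp H1 H2 H3 H4 H5.
  set (u := re - rd). set (v := re - rc). set (x := re - rb). set (y := re - ra).
  assert (E1 : rd - rc = v - u) by (unfold u, v; ring).
  assert (E2 : rb - ra = y - x) by (unfold x, y; ring).
  rewrite E1, E2.
  pose proof (incr p (v - u) (y - u) u Hp ltac:(unfold u,v,y; lra) ltac:(unfold u; lra)) as I1.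
  replace (v - u + u) with v in I1 by ring. replace (y - u + u) with y in I1 by ring.
  assert (0 < p) by lra.
  pose proof (abspow_mono p u x H ltac:(unfold u,x; lra)).
  pose proof (abspow_mono p (y - x) (y - u) H ltac:(unfold u,x,y; lra)).
  lra.
Qed.
Definition W (p : R) (r : nat -> R) (i j : nat) : R := weight p (r i) (r j).

Fixpoint pcf p r (a : nat) (l : list nat) : R :=
  match l with [] => 0 | c :: t => W p r a c + pcf p r c t end.

Definition ccost p r (l : list nat) : R :=
  match l with [] => 0 | a :: t => pcf p r a (t ++ [a]) end.

Definition sumR (l : list R) := fold_right Rplus 0 l.

Lemma sumR_app l1 l2 : sumR (l1 ++ l2) = sumR l1 + sumR l2.
Proof. induction l1; simpl; [ring|]. unfold sumR in *; simpl; rewrite IHl1; ring. Qed.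

Lemma last_cons_any (b a : nat) t : last (b :: t) a = last t b.
Proof.
  revert b a; induction t as [|c u IH]; intros b a; [reflexivity|].
  change (last (c :: u) a = last (c :: u) b). destruct u; [reflexivity|].
  rewrite !IH; reflexivity.
Qed.

Lemma W_same p r a : W p r a a = 0.
Proof. unfold W, weight; rewrite Rminus_diag; unfold abspow; destruct (Req_EM_T 0 0); lra. Qed.

Lemma pcf_snoc p r a t c : pcf p r a (t ++ [c]) = pcf p r a t + W p r (last t a) c.
Proof.
  revert a; induction t as [|b t IH]; intro a.
  - simpl; ring.
  - cbn [app pcf]; rewrite IH, last_cons_any. ring.
Qed.

Lemma rot1 p r a t : ccost p r (a :: t) = ccost p r (t ++ [a]).
Proof.
  destruct t as [|b t]; [reflexivity|]. simpl.
  rewrite !pcf_snoc, last_last. ring.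
Qed.

Lemma rot p r l1 l2 : ccost p r (l1 ++ l2) = ccost p r (l2 ++ l1).
Proof.
  revert l2; induction l1 as [|a l1 IH]; intro l2.
  - rewrite app_nil_r; reflexivity.
  - simpl app. rewrite rot1, <- app_assoc, IH, <- app_assoc. reflexivity.
Qed.

Lemma head_rm p r x b t a :
  ccost p r (x :: b :: t ++ [a]) = ccost p r (b :: t ++ [a]) + W p r x b + W p r a x - W p r a b.
Proof.
  unfold ccost. cbn [app pcf].
  rewrite !pcf_snoc, !last_last. ring.
Qed.

Lemma W_rev p r i j : W p r i j = abspow (r j - r i) p.
Proof. unfold W, weight. replace (r i - r j) with (- (r j - r i)) by ring. apply abspow_opp. Qed.

Lemma W_sym p r i j : W p r i j = W p r j i.
Proof. rewrite W_rev; reflexivity. Qed.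

Lemma Z_step p r n : (2 <= n)%nat ->
  min_cost_formula (S n) p r = min_cost_formula n p r - abspow (r n - r (n-1)%nat) p
    + abspow (r (S n) - r n) p + abspow (r (S n) - r (n-1)%nat) p.
Proof.
  intro Hn. unfold min_cost_formula.
  replace (S n - 1)%nat with n by lia.
  replace (S n - 2)%nat with (S (n - 2)) by lia.
  rewrite seq_S, map_app. fold (sumR (map (fun i => abspow (r (i + 2)%nat - r i) p) (seq 1 (n - 2)) ++
     map (fun i => abspow (r (i + 2)%nat - r i) p) [(1 + (n - 2))%nat])).
  rewrite sumR_app. simpl map. unfold sumR at 2; simpl fold_right.
  replace (S (n - 2 + 2))%nat with (S n) by lia.
  replace (S (n - 2))%nat with (n - 1)%nat by lia.
  unfold sumR. ring.
Qed.

Lemma step_ineq p r N n a b : 1 <= p ->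
  (forall i j, (1 <= i)%nat -> (i <= j)%nat -> (j <= N)%nat -> r i <= r j) ->
  (2 <= n)%nat -> (S n <= N)%nat -> a <> b -> (1 <= a <= n)%nat -> (1 <= b <= n)%nat ->
  min_cost_formula (S n) p r - min_cost_formula n p r <=
  W p r (S n) b + W p r a (S n) - W p r a b.
Proof.
  intros Hp Hm Hn HN Hab Ha Hb. rewrite Z_step by lia.
  assert (forall x y, (x < y)%nat -> (1 <= x <= n)%nat -> (1 <= y <= n)%nat ->
     abspow (r (S n) - r n) p + abspow (r (S n) - r (n-1)%nat) p - abspow (r n - r (n-1)%nat) p
     <= abspow (r (S n) - r y) p + abspow (r (S n) - r x) p - abspow (r y - r x) p) as K.
  { intros x y Hxy Hx Hy. apply key; auto; apply Hm; lia. }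
  rewrite (W_sym p r a (S n)).
  destruct (Nat.lt_total a b) as [H|[H|H]]; [|lia| ].
  - pose proof (K a b H Ha Hb). rewrite (W_rev p r a b). unfold W, weight. lra.
  - pose proof (K b a H Hb Ha). unfold W, weight. lra.
Qed.

Lemma in_last_nonempty (t : list nat) (d : nat) : t <> [] -> In (last t d) t.
Proof.
  intro H. destruct (exists_last H) as [t' [a ->]]. rewrite last_last.
  apply in_or_app; right; left; reflexivity.
Qed.

Lemma lower p r N : 1 <= p ->
  (forall i j, (1 <= i)%nat -> (i <= j)%nat -> (j <= N)%nat -> r i <= r j) ->
  forall n, (2 <= n <= N)%nat -> forall l, Permutation l (seq 1 n) ->
  min_cost_formula n p r <= ccost p r l.
Proof.
  intros Hp Hm n Hn. induction n as [|n IH]; [lia|].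
  intros l Hl.
  destruct (Nat.eq_dec n 1) as [->|Hn1].
  - simpl seq in Hl. apply Permutation_sym, Permutation_length_2_inv in Hl.
    unfold min_cost_formula; simpl.
    destruct Hl as [ E | E ]; rewrite E; unfold ccost; simpl; rewrite !W_rev; assert (abspow (r 1%nat - r 2%nat) p = abspow (r 2%nat - r 1%nat) p) by (rewrite <- abspow_opp; f_equal; ring); lra.
  - assert (Hin : In (S n) l).
    { apply Permutation_in with (seq 1 (S n)); [apply Permutation_sym; auto|].
      apply in_seq; lia. }
    destruct (in_split _ _ Hin) as [l1 [l2 ->]].
    rewrite seq_S in Hl. replace (1 + n)%nat with (S n) in Hl by lia.
    assert (Hp12 : Permutation (l2 ++ l1) (seq 1 n)).
    { apply Permutation_trans with (l1 ++ l2). apply Permutation_app_comm.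
      rewrite <- (app_nil_r (seq 1 n)). eapply Permutation_app_inv; exact Hl. }
    rewrite rot. simpl app.
    assert (Hlen : length (l2 ++ l1) = n) by (rewrite (Permutation_length Hp12), length_seq; reflexivity).
    assert (HND : NoDup (l2 ++ l1)) by (eapply Permutation_NoDup; [apply Permutation_sym; exact Hp12| apply seq_NoDup]).
    pose proof (IH ltac:(lia) _ Hp12) as IHm.
    revert Hlen HND IHm Hp12. generalize (l2 ++ l1) as m. intros m Hlen HND IHm Hpm.
    destruct m as [|b t']; [simpl in Hlen; lia|].
    assert (Ht' : t' <> []) by (intro E; rewrite E in Hlen; simpl in Hlen; lia).
    destruct (exists_last Ht') as [t [a Ht]]. subst t'.
    rewrite head_rm.
    assert (Hab : a <> b).
    { intro E; subst. inversion HND; subst. apply H1. apply in_or_app; right; left; auto. }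
    assert (Ha : (1 <= a <= n)%nat).
    { assert (In a (seq 1 n)) by (apply (Permutation_in _ Hpm); right; apply in_or_app; right; left; auto).
      apply in_seq in H; lia. }
    assert (Hb : (1 <= b <= n)%nat).
    { assert (In b (seq 1 n)) by (apply (Permutation_in _ Hpm); left; auto).
      apply in_seq in H; lia. }
    pose proof (step_ineq p r N n a b Hp Hm ltac:(lia) ltac:(lia) Hab Ha Hb). lra.
Qed.

Lemma pcf_map p r s a k :
  pcf p r (s a) (map s (seq (S a) k)) = sumR (map (fun i => W p r (s i) (s (S i))) (seq a k)).
Proof.
  revert a; induction k as [|k IH]; intro a; [reflexivity|].
  simpl. rewrite IH. unfold sumR; simpl. reflexivity.
Qed.

Lemma cycle_ccost N p r s : (2 <= N)%nat ->
  cycle_cost N p r s = ccost p r (map s (seq 1 N)).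
Proof.
  intro HN. destruct N as [|M]; [lia|].
  change (map s (seq 1 (S M))) with (s 1%nat :: map s (seq 2 M)).
  unfold ccost. rewrite pcf_snoc, pcf_map.
  assert (Hl : last (map s (seq 2 M)) (s 1%nat) = s (S M)).
  { destruct M as [|M']; [lia|]. rewrite seq_S, map_app. change (map s [(2 + M')%nat]) with [s (2 + M')%nat]. rewrite last_last. f_equal; lia. }
  rewrite Hl.
  unfold cycle_cost. fold (sumR (map (fun i => weight p (r (s i)) (r (s (cyc_next (S M) i)))) (seq 1 (S M)))).
  rewrite seq_S, map_app, sumR_app.
  rewrite (map_ext_in _ (fun i => W p r (s i) (s (S i)))).
  2:{ intros i Hi. apply in_seq in Hi. unfold cyc_next, W.
      destruct (Nat.eqb_spec i (S M)); [lia|reflexivity]. }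
  replace (1 + M)%nat with (S M) by lia.
  simpl (map _ [S M]). unfold cyc_next at 1. rewrite Nat.eqb_refl.
  unfold sumR at 2; simpl. unfold W. ring.
Qed.

Lemma perm_list N s : is_perm N s -> Permutation (map s (seq 1 N)) (seq 1 N).
Proof.
  intros [Hr Hi]. apply NoDup_Permutation_bis.
  - apply NoDup_map_NoDup_ForallPairs; [|apply seq_NoDup].
    intros a b Ha Hb. apply in_seq in Ha, Hb. apply Hi; lia.
  - rewrite length_map; lia.
  - intros x Hx. apply in_map_iff in Hx. destruct Hx as [i [<- Hi']].
    apply in_seq in Hi'. apply in_seq. specialize (Hr i ltac:(lia)). lia.
Qed.

Lemma sigma_perm N : is_perm N (sigma_tilde N).
Proof.
  split.
  - intros i Hi. unfold sigma_tilde. destruct (Nat.leb_spec (2*i) (N+1)); lia.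
  - intros i j Hi Hj. unfold sigma_tilde.
    destruct (Nat.leb_spec (2*i) (N+1)); destruct (Nat.leb_spec (2*j) (N+1)); lia.
Qed.

Lemma sigma_insert N : (2 <= N)%nat -> exists k, (1 <= k < N)%nat /\
  (forall i, (1 <= i <= k)%nat -> sigma_tilde (S N) i = sigma_tilde N i) /\
  sigma_tilde (S N) (S k) = S N /\
  (forall i, (k < i <= N)%nat -> sigma_tilde (S N) (S i) = sigma_tilde N i) /\
  ((sigma_tilde N k = (N-1)%nat /\ sigma_tilde N (S k) = N) \/
   (sigma_tilde N k = N /\ sigma_tilde N (S k) = (N-1)%nat)).
Proof.
  intro HN. destruct (Nat.Even_or_Odd N) as [[m Hm]|[m Hm]].
  - exists m. unfold sigma_tilde. split; [lia|]. split; [|split; [|split]].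
    + intros i Hi. destruct (Nat.leb_spec (2*i) (S N+1)); destruct (Nat.leb_spec (2*i) (N+1)); lia.
    + destruct (Nat.leb_spec (2*S m) (S N+1)); lia.
    + intros i Hi. destruct (Nat.leb_spec (2*S i) (S N+1)); destruct (Nat.leb_spec (2*i) (N+1)); lia.
    + left. destruct (Nat.leb_spec (2*m) (N+1)); destruct (Nat.leb_spec (2*S m) (N+1)); lia.
  - exists (S m). unfold sigma_tilde. split; [lia|]. split; [|split; [|split]].
    + intros i Hi. destruct (Nat.leb_spec (2*i) (S N+1)); destruct (Nat.leb_spec (2*i) (N+1)); lia.
    + destruct (Nat.leb_spec (2*S (S m)) (S N+1)); lia.
    + intros i Hi. destruct (Nat.leb_spec (2*S i) (S N+1)); destruct (Nat.leb_spec (2*i) (N+1)); lia.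
    + right. destruct (Nat.leb_spec (2*S m) (N+1)); destruct (Nat.leb_spec (2*S (S m)) (N+1)); lia.
Qed.

Lemma zig p r : forall N, (2 <= N)%nat ->
  ccost p r (map (sigma_tilde N) (seq 1 N)) = min_cost_formula N p r.
Proof.
  intros N HN. induction N as [|N IH]; [lia|].
  destruct (Nat.eq_dec N 1) as [->|HN1].
  - unfold min_cost_formula. simpl. unfold W, weight, sigma_tilde; simpl.
    assert (abspow (r 1%nat - r 2%nat) p = abspow (r 2%nat - r 1%nat) p)
      by (rewrite <- abspow_opp; f_equal; ring). lra.
  - destruct (sigma_insert N ltac:(lia)) as [k [Hk [Ha [Hb [Hc Hd]]]]].
    set (s := sigma_tilde N).
    set (L1 := map s (seq 1 (k - 1))).
    set (L2 := map s (seq (S (S k)) (N - k - 1))).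
    assert (E1 : map (sigma_tilde (S N)) (seq 1 (S N)) = (L1 ++ [s k]) ++ S N :: s (S k) :: L2).
    { replace (S N) with (k - 1 + (1 + (1 + (1 + (N - k - 1)))))%nat at 2 by lia.
      rewrite !seq_app, !map_app. unfold L1, L2.
      rewrite <- app_assoc. f_equal.
      - apply map_ext_in. intros i Hi. apply in_seq in Hi. apply Ha; lia.
      - simpl. rewrite ?Nat.add_1_r. replace (S (k - 1)) with k by lia.
        rewrite Ha by lia. rewrite Hb, (Hc (S k)) by lia. do 3 f_equal.
        rewrite <- (seq_shift _ (S (S k))), map_map.
        apply map_ext_in. intros i Hi. apply in_seq in Hi. apply Hc; lia. }
    assert (E2 : map s (seq 1 N) = (L1 ++ [s k]) ++ s (S k) :: L2).
    { replace (seq 1 N) with (seq 1 (k - 1 + (1 + (1 + (N - k - 1))))) by (f_equal; lia).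
      rewrite !seq_app, !map_app. unfold L1, L2. rewrite <- app_assoc. f_equal.
      simpl. rewrite ?Nat.add_1_r. replace (S (k - 1)) with k by lia. reflexivity. }
    rewrite E1, rot. simpl app.
    replace (s (S k) :: L2 ++ L1 ++ [s k]) with (s (S k) :: (L2 ++ L1) ++ [s k]) by (rewrite app_assoc; reflexivity).
    rewrite head_rm.
    replace (s (S k) :: (L2 ++ L1) ++ [s k]) with ((s (S k) :: L2) ++ (L1 ++ [s k])) by (simpl; rewrite app_assoc; reflexivity).
    rewrite rot, <- E2. fold s in IH. rewrite IH by lia.
    rewrite Z_step by lia.
    assert (abspow (r (N - 1)%nat - r N) p = abspow (r N - r (N - 1)%nat) p)
      by (rewrite <- abspow_opp; f_equal; ring).
    assert (abspow (r N - r (S N)) p = abspow (r (S N) - r N) p)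
      by (rewrite <- abspow_opp; f_equal; ring).
    assert (abspow (r (N - 1)%nat - r (S N)) p = abspow (r (S N) - r (N - 1)%nat) p)
      by (rewrite <- abspow_opp; f_equal; ring).
    fold s in Hd. destruct Hd as [[-> ->] | [-> ->]]; rewrite ?W_rev; unfold W, weight; try lra.
Qed.

Theorem proposition1 (N : nat) (p : R) (r : nat -> R)
  (hN : (3 <= N)%nat) (hp : 1 < p)
  (hr01 : forall i, (1 <= i <= N)%nat -> 0 <= r i <= 1)
  (hmono : forall i j, (1 <= i)%nat -> (i <= j)%nat -> (j <= N)%nat -> r i <= r j) :
  is_perm N (sigma_tilde N) /\
  (forall s : nat -> nat, is_perm N s ->
     cycle_cost N p r (sigma_tilde N) <= cycle_cost N p r s) /\
  cycle_cost N p r (sigma_tilde N) = min_cost_formula N p r.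
Proof.
  assert (HZ : cycle_cost N p r (sigma_tilde N) = min_cost_formula N p r).
  { rewrite cycle_ccost by lia. apply zig; lia. }
  split; [apply sigma_perm|]. split; [|exact HZ].
  intros s Hs. rewrite HZ, cycle_ccost by lia.
  apply (lower p r N ltac:(lra) hmono N ltac:(lia)). apply perm_list; exact Hs.
Qed.
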